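(* Let $M$ be an $m\times n$ $0/1$-matrix and let $B$ be a block of $M$ of size $r\times c$. Given the data structure $\Phi(B)$, and given the set of entries of the input boundary $B^-$ that are reachable from $(1,1)$, one can determine in $O(r+c)$ time the set of entries of the output boundary $B^+$ that are reachable from $(1,1)$.
   Context: Entries of $M$ are indexed $(a,b)$, rows increasing from bottom to top, columns left to right. A path from $(k,l)$ to $(i,j)$ is a sequence of $1$-entries starting at $(k,l)$ and ending at $(i,j)$ in which each step goes from $(a,b)$ to $(a+1,b)$, $(a,b+1)$ or $(a+1,b+1)$; $(i,j)$ is reachable from $(k,l)$ if such a path exists. A block $B$ is the submatrix formed by rows $r^-\le a\le r^+$ and columns $s^-\le b\le s^+$. Its input boundary $B^-$ consists of the entries in row $r^-$ or column $s^-$ of $B$, ordered: first row $r^-$ from column $s^+$ down to $s^-$, then the remaining entries of column $s^-$ from row $r^-+1$ up to $r^+$. Its output boundary $B^+$ consists of the entries in row $r^+$ or column $s^+$ of $B$, ordered: first column $s^+$ from row $r^-$ up to $r^+$, then the remaining entries of row $r^+$ from column $s^+-1$ down to $s^-$. The data structure $\Phi(B)$ stores: (1) for each $1$-entry $i$ of $B^-$, the first entry $\sigma_A(i)$ and the last entry $\sigma_Z(i)$ of $B^+$ (in output-boundary order) that are reachable from $i$; (2) for each $1$-entry $j$ of $B^+$, a flag $f(j)$ indicating whether $j$ is reachable from some entry of $B^-$, a list $L_A(j)$ of the $1$-entries $i\in B^-$ with $\sigma_A(i)=j$, and a list $L_Z(j)$ of the $1$-entries $i\in B^-$ with $\sigma_Z(i)=j$.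 Running time is measured in the RAM model with constant-time access to these stored items. *)

(* Defs.v *)
From mathcomp Require Import all_boot all_algebra.
Set Implicit Arguments. Unset Strict Implicit. Unset Printing Implicit Defensive.

(* Matrices, entries, reachability (0-based: paper entry (a,b) is our  *)
(* (a-1,b-1); row 0 is the bottom row, column 0 the leftmost).         *)

Section Reach.
Variables (m n : nat) (M : 'M[bool]_(m, n)).

(* value of the entry at nat coordinates; false outside the matrix *)
Definition one (x : nat * nat) : bool :=
  match @insub nat (fun i => i < m) _ x.1, @insub nat (fun j => j < n) _ x.2 with
  | Some i, Some j => M i j
  | _, _ => false
  end.

Definition stepRel : rel (nat * nat) := fun x y =>
  [|| (y.1 == x.1.+1) && (y.2 == x.2),
      (y.1 == x.1) && (y.2 == x.2.+1)
    | (y.1 == x.1.+1) && (y.2 == x.2.+1)].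

Definition reach (x y : nat * nat) : Prop :=
  exists s : seq (nat * nat),
    [/\ path stepRel x s, last x s = y & all one (x :: s)].

End Reach.

(* Blocks and their boundaries.  The block has rows rm..rp, columns    *)
(* sm..sp (0-based); r = rp - rm + 1, c = sp - sm + 1.  Both boundaries *)
(* have r + c - 1 entries, indexed 0 .. r+c-2 in the paper's order.     *)

Definition brows (rm rp : nat) := (rp - rm).+1.
Definition bcols (sm sp : nat) := (sp - sm).+1.
Definition blen (rm rp sm sp : nat) := (brows rm rp + bcols sm sp).-1.

Definition inpos (rm rp sm sp k : nat) : nat * nat :=
  if k < bcols sm sp then (rm, sp - k) else (rm + (k - bcols sm sp).+1, sm).

Definition outpos (rm rp sm sp k : nat) : nat * nat :=
  if k < brows rm rp then (rm + k, sp) else (rp, sp - (k - brows rm rp).+1).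

Section Phi.
Variables (m n : nat) (M : 'M[bool]_(m, n)) (rm rp sm sp : nat).
Let p := blen rm rp sm sp.
Let I k := inpos rm rp sm sp k.
Let O k := outpos rm rp sm sp k.

Definition is_sigmaA (i j : nat) : Prop :=
  [/\ j < p, reach M (I i) (O j) & forall j', j' < j -> ~ reach M (I i) (O j')].

Definition is_sigmaZ (i j : nat) : Prop :=
  [/\ j < p, reach M (I i) (O j) &
     forall j', j < j' -> j' < p -> ~ reach M (I i) (O j')].

Definition fflag (j : nat) : Prop := exists2 i, i < p & reach M (I i) (O j).

End Phi.

Inductive instr : Type :=
| IConst of nat & nat
| IAdd of nat & nat & nat
| ISub of nat & nat & nat    (* ISub d a b   : R[d] := R[a] - R[b] (trunc)*)
| ILoad of nat & nat
| IStore of nat & nat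
| IJz of nat & nat
| IHalt.

Definition program := seq instr.

Record config := Config { cpc : nat; cregs : nat -> nat; cmem : nat -> nat }.

Definition upd (f : nat -> nat) (a v : nat) : nat -> nat :=
  fun x => if x == a then v else f x.

(* one step; a halted configuration (pc on IHalt or outside the program)
   is left unchanged *)
Definition ram_step (P : program) (s : config) : config :=
  let R := cregs s in let Mm := cmem s in let q := cpc s in
  match nth IHalt P q with
  | IConst d k => Config q.+1 (upd R d k) Mm
  | IAdd d a b => Config q.+1 (upd R d (R a + R b)) Mm
  | ISub d a b => Config q.+1 (upd R d (R a - R b)) Mm
  | ILoad d a => Config q.+1 (upd R d (Mm (R a))) Mm
  | IStore a x => Config q.+1 R (upd Mm (R a) (R x))
  | IJz x t => Config (if R x == 0 then t else q.+1) R Mm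
  | IHalt => s
  end.

Definition halted (P : program) (s : config) : bool :=
  if nth IHalt P (cpc s) is IHalt then true else false.

Definition init (Mm : nat -> nat) : config := Config 0 (fun _ => 0) Mm.

Definition encb (v : nat) (P : Prop) : Prop := (v = 1 /\ P) \/ (v = 0 /\ ~ P).

Definition enco (v : nat) (Q : nat -> Prop) (p : nat) : Prop :=
  (exists2 j, v = j.+1 & Q j) \/ (v = 0 /\ forall j, j < p -> ~ Q j).

Definition memlist (Mm : nat -> nat) (ptr len : nat) : seq nat :=
  [seq Mm (ptr + t) | t <- iota 0 len].

(* Layout:
   Mm 0 = r, Mm 1 = c, Mm 2 = IN, Mm 3 = OUT, Mm 4 = FREE.
   Input entry k (0 <= k < r+c-1), record at IN + 4k:
     [is-1-entry ; sigma_A(k)+1 or 0 ; sigma_Z(k)+1 or 0 ;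
      reachable-from-(1,1) bit ].
   Output entry j, record at OUT + 6j:
     [is-1-entry ; f(j) ; |L_A(j)| ; ptr to L_A(j) ; |L_Z(j)| ; ptr to L_Z(j)],
   the lists being stored as duplicate-free sequences of input indices. *)
Definition encodes (m n : nat) (M : 'M[bool]_(m, n)) (rm rp sm sp : nat)
    (Mm : nat -> nat) : Prop :=
  let p := blen rm rp sm sp in
  let I := inpos rm rp sm sp in
  let O := outpos rm rp sm sp in
  let IN := Mm 2 in let OUT := Mm 3 in let FREE := Mm 4 in
  [/\ Mm 0 = brows rm rp /\ Mm 1 = bcols sm sp,
      IN + 4 * p <= FREE /\ OUT + 6 * p <= FREE,
      (forall a, FREE <= a -> Mm a = 0),
      (forall k, k < p ->
        [/\ encb (Mm (IN + 4 * k)) (one M (I k)),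
            enco (Mm (IN + 4 * k + 1)) (is_sigmaA M rm rp sm sp k) p,
            enco (Mm (IN + 4 * k + 2)) (is_sigmaZ M rm rp sm sp k) p &
            encb (Mm (IN + 4 * k + 3)) (reach M (0, 0) (I k))]) &
      (forall j, j < p ->
        let lenA := Mm (OUT + 6 * j + 2) in let ptrA := Mm (OUT + 6 * j + 3) in
        let lenZ := Mm (OUT + 6 * j + 4) in let ptrZ := Mm (OUT + 6 * j + 5) in
        [/\ encb (Mm (OUT + 6 * j)) (one M (O j)),
            encb (Mm (OUT + 6 * j + 1)) (fflag M rm rp sm sp j),
            ptrA + lenA <= FREE /\ ptrZ + lenZ <= FREE,
            uniq (memlist Mm ptrA lenA) /\ uniq (memlist Mm ptrZ lenZ) &
            (forall i, i \in memlist Mm ptrA lenA <->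
                 (i < p /\ is_sigmaA M rm rp sm sp i j)) /\
            (forall i, i \in memlist Mm ptrZ lenZ <->
                 (i < p /\ is_sigmaZ M rm rp sm sp i j))])].

Definition output_ok (m n : nat) (M : 'M[bool]_(m, n)) (rm rp sm sp FREE : nat)
    (Mm : nat -> nat) : Prop :=
  forall j, j < blen rm rp sm sp ->
    encb (Mm (FREE + j)) (reach M (0, 0) (outpos rm rp sm sp j)).

(* Main.v *)
Require Import Defs.
From mathcomp Require Import all_boot all_algebra.
From mathcomp Require Import zify.
From Stdlib Require Import Classical.
Set Implicit Arguments. Unset Strict Implicit. Unset Printing Implicit Defensive.


Lemma stepRelE (x y : nat * nat) : stepRel x y ->
  [/\ x.1 <= y.1, y.1 <= x.1.+1, x.2 <= y.2 & y.2 <= x.2.+1].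
Proof.
rewrite /stepRel; case/or3P=> /andP[/eqP-> /eqP->]; split; lia.
Qed.

Lemma path_mono x s : path stepRel x s -> x.1 <= (last x s).1 /\ x.2 <= (last x s).2.
Proof.
elim: s x => [|y s IH] x /=; first by split.
case/andP=> /stepRelE [h1 h2 h3 h4] /IH [h5 h6]; split; lia.
Qed.

Lemma reach_refl m n (M : 'M[bool]_(m, n)) x : Defs.one M x -> reach M x x.
Proof. by move=> h; exists [::]; rewrite /= h. Qed.

Lemma reach_trans m n (M : 'M[bool]_(m, n)) x y z :
  reach M x y -> reach M y z -> reach M x z.
Proof.
case=> s1 [p1 l1 a1] [s2 [p2 l2 a2]].
exists (s1 ++ s2); split.
- by rewrite cat_path p1 l1.
- by rewrite last_cat l1.
- move: a1 a2; rewrite /= all_cat => /andP[-> ->] /andP[_ ->]; by [].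
Qed.

Lemma reach_cons m n (M : 'M[bool]_(m, n)) x y z :
  stepRel x y -> Defs.one M x -> reach M y z -> reach M x z.
Proof.
move=> sxy ox [s [p l a]]; exists (y :: s); split => //=.
- by rewrite sxy.
- by rewrite ox.
Qed.

Lemma reach_path m n (M : 'M[bool]_(m, n)) x s :
  path stepRel x s -> all (Defs.one M) (x :: s) -> reach M x (last x s).
Proof. by move=> p a; exists s. Qed.

Lemma reach_split m n (M : 'M[bool]_(m, n)) x s w :
  path stepRel x s -> all (Defs.one M) (x :: s) -> w \in x :: s ->
  reach M x w /\ reach M w (last x s).
Proof.
elim: s x => [|y s IH] x /=.
  move=> _ /andP[ox _]; rewrite inE => /eqP->; split; exact: reach_refl.
case/andP=> sxy p /andP[ox a]; rewrite inE => /orP[/eqP->|hw].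
  split; first exact: reach_refl.
  by apply: (reach_path (x:=x) (s:=y::s)) => /=; rewrite ?sxy ?p ?ox.
have [h1 h2] := IH y p a hw; split => //; exact: reach_cons sxy ox h1.
Qed.

Lemma cross_gen N : forall (x y : nat * nat) xs ys, size xs + size ys <= N ->
  path stepRel x xs -> path stepRel y ys ->
  x.1 <= y.1 -> y.2 <= x.2 ->
  (last y ys).1 <= (last x xs).1 -> (last x xs).2 <= (last y ys).2 ->
  exists2 w, w \in x :: xs & w \in y :: ys.
Proof.
elim: N => [|N IH] x y xs ys hN px py h1 h2 h3 h4.
- move: hN px h3 h4; case: xs => [|? ?] //; case: ys py => [|? ?] // _ _ _ /= h3 h4.
  exists x; rewrite ?inE //.
  apply/eqP; case: x y h1 h2 h3 h4 => a b [c d] /= *; apply/pair_equal_spec; split; lia.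
- case: (x =P y) => [<-|nxy]; first by exists x; rewrite inE eqxx.
  have [lt2|ge2] := ltnP y.2 x.2.
  + case: ys hN py h3 h4 => [|y' ys] /=.
    * move=> _ _ _ h4; have := path_mono px; lia.
    move=> hN /andP[/stepRelE [e1 e2 e3 e4] py'] h3 h4.
    have [w hw1 hw2] := IH x y' xs ys ltac:(lia) px py' ltac:(lia) ltac:(lia) h3 h4.
    by exists w => //; rewrite inE hw2 orbT.
  + have e2 : y.2 = x.2 by lia.
    have lt1 : x.1 < y.1.
      rewrite ltn_neqAle h1 andbT; apply/eqP=> e1; apply: nxy.
      by case: x y e1 e2 {h1 h2 ge2 px py h3 h4} => a b [c d] /= -> ->.
    case: xs hN px h3 h4 => [|x' xs] /=.
    * move=> _ _ h3 _; have := path_mono py; lia.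
    move=> hN /andP[/stepRelE [e1 e3 e4 e5] px'] h3 h4.
    have [w hw1 hw2] := IH x' y xs ys ltac:(lia) px' py ltac:(lia) ltac:(lia) h3 h4.
    by exists w => //; rewrite inE hw1 orbT.
Qed.

Lemma in_ord rm rp sm sp k k' : rm <= rp -> sm <= sp -> k <= k' -> k' < blen rm rp sm sp ->
  (inpos rm rp sm sp k).1 <= (inpos rm rp sm sp k').1 /\
  (inpos rm rp sm sp k').2 <= (inpos rm rp sm sp k).2.
Proof.
rewrite /inpos /blen /brows /bcols => *.
case: ifP => h1; case: ifP => h2 /=; split; lia.
Qed.

Lemma out_ord rm rp sm sp k k' : rm <= rp -> sm <= sp -> k <= k' -> k' < blen rm rp sm sp ->
  (outpos rm rp sm sp k).1 <= (outpos rm rp sm sp k').1 /\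
  (outpos rm rp sm sp k').2 <= (outpos rm rp sm sp k).2.
Proof.
rewrite /outpos /blen /brows /bcols => *.
case: ifP => h1; case: ifP => h2 /=; split; lia.
Qed.

Lemma sound m n (M : 'M[bool]_(m, n)) rm rp sm sp k a z j i :
  rm <= rp -> sm <= sp ->
  let p := blen rm rp sm sp in let I := inpos rm rp sm sp in let O := outpos rm rp sm sp in
  k < p -> i < p -> z < p ->
  reach M (0, 0) (I k) -> reach M (I k) (O a) -> reach M (I k) (O z) ->
  a <= j -> j <= z -> reach M (I i) (O j) -> reach M (0, 0) (O j).
Proof.
move=> hr hs p I O kp ip zp r0 [s1 [p1 l1 a1]] [s2 [p2 l2 a2]] aj jz [t [pt lt att]].
apply: (reach_trans r0).
have [ki|ik] := leqP k i.
- have [o1 o2] := in_ord hr hs ki ip.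
  have [o3 o4] := out_ord hr hs jz zp.
  have [w hw1 hw2] := cross_gen (leqnn _) p2 pt o1 o2
    ltac:(by rewrite lt l2) ltac:(by rewrite lt l2).
  have [h1 _] := reach_split p2 a2 hw1.
  have [_ h2] := reach_split pt att hw2.
  by apply: (reach_trans h1); rewrite -lt.
- have [o1 o2] := in_ord hr hs (ltnW ik) kp.
  have jp : j < p by apply: leq_ltn_trans zp.
  have [o3 o4] := out_ord hr hs aj jp.
  have [w hw1 hw2] := cross_gen (leqnn _) pt p1 o1 o2
    ltac:(by rewrite lt l1) ltac:(by rewrite lt l1).
  have [h1 _] := reach_split p1 a1 hw2.
  have [_ h2] := reach_split pt att hw1.
  by apply: (reach_trans h1); rewrite -lt.
Qed.

Definition inB rm sm (w : nat * nat) := (rm <= w.1) && (sm <= w.2).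
Definition onIn rm sm (w : nat * nat) := inB rm sm w && ((w.1 == rm) || (w.2 == sm)).

Lemma entry_gen rm sm x s : path stepRel x s -> inB rm sm (last x s) ->
  ~~ inB rm sm x || onIn rm sm x -> exists2 w, w \in x :: s & onIn rm sm w.
Proof.
elim: s x => [|y s IH] x /=.
  move=> _ hl /orP[h|h]; first by rewrite hl in h.
  by exists x; rewrite ?inE ?eqxx.
case/andP=> /stepRelE [e1 e2 e3 e4] p hl /orP[nx|ox]; last by exists x; rewrite ?inE ?eqxx.
have [w hw1 hw2] : exists2 w, w \in y :: s & onIn rm sm w.
  apply: IH => //.
  case iy: (inB rm sm y); last by [].
  apply/orP; right; rewrite /onIn iy /=.
  move: nx iy; rewrite /inB; case/nandP => h /andP[h1 h2]; apply/orP; [left|right]; apply/eqP; lia.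
by exists w => //; rewrite inE hw1 orbT.
Qed.

Lemma onIn_inpos rm rp sm sp w : rm <= rp -> sm <= sp -> onIn rm sm w -> w.1 <= rp -> w.2 <= sp ->
  exists2 k, k < blen rm rp sm sp & inpos rm rp sm sp k = w.
Proof.
rewrite /onIn /inB /inpos /blen /brows /bcols; case: w => a b /= hr hs /andP[/andP[h1 h2] h3] h4 h5.
case/orP: h3 => /eqP e.
- exists (sp - b); first lia.
  rewrite ifT; last lia. apply/pair_equal_spec; split; lia.
- have [ea|na] := eqVneq a rm.
  + exists (sp - b); first lia.
    rewrite ifT; last lia. apply/pair_equal_spec; split; lia.
  + exists ((sp - sm) + (a - rm)); first lia.
    rewrite ifF; last lia. apply/pair_equal_spec; split; lia.
Qed.

Lemma entry m n (M : 'M[bool]_(m, n)) rm rp sm sp y :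
  rm <= rp -> sm <= sp -> rm <= y.1 -> y.1 <= rp -> sm <= y.2 -> y.2 <= sp ->
  reach M (0, 0) y -> exists2 k, k < blen rm rp sm sp &
    reach M (0, 0) (inpos rm rp sm sp k) /\ reach M (inpos rm rp sm sp k) y.
Proof.
move=> hr hs y1 y2 y3 y4 [s [p l a]].
have [w hw1 hw2] : exists2 w, w \in (0, 0) :: s & onIn rm sm w.
  apply: (entry_gen p); first by rewrite l /inB y1 y3.
  rewrite /onIn /inB /=; case: rm {hr y1 y2} => [|?] ; case: sm {hs y3 y4} => [|?] //=.
have [h1 h2] := reach_split p a hw1.
have [w1 w2] : w.1 <= y.1 /\ w.2 <= y.2.
  case: h2 => t [pt lt _]; have := path_mono pt; rewrite lt l; by [].
have [k kp ek] := onIn_inpos hr hs hw2 (leq_trans w1 y2) (leq_trans w2 y4).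
exists k => //; rewrite ek; split => //; by rewrite -l.
Qed.



Lemma ex_min (P : nat -> Prop) j : P j ->
  exists a, [/\ a <= j, P a & forall a', a' < a -> ~ P a'].
Proof.
elim: j {-2}j (leqnn j) => [|N IH] j hj Pj.
  exists j; split => // a' ha'; lia.
destruct (classic (exists a', a' < j /\ P a')) as [[a' [h1 h2]]|hn].
  have [a [h3 h4 h5]] := IH a' ltac:(lia) h2; exists a; split => //; lia.
exists j; split => // a' ha' Pa'; apply: hn; by exists a'.
Qed.

Lemma ex_max (P : nat -> Prop) p j : P j -> j < p ->
  exists z, [/\ j <= z, z < p, P z & forall z', z < z' -> z' < p -> ~ P z'].
Proof.
move=> Pj jp; elim: (p - j) {-2}j (leqnn (p - j)) Pj jp => [|N IH] j' hj Pj jp.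
  lia.
destruct (classic (exists z', [/\ j' < z', z' < p & P z'])) as [[z' [h1 h2 h3]]|hn].
  have [z [h4 h5 h6 h7]] := IH z' ltac:(lia) h3 h2; exists z; split => //; lia.
exists j'; split => // z' h1 h2 Pz'; apply: hn; by exists z'.
Qed.

Definition good (Mm : nat -> nat) k := Mm (Mm 2 + 4 * k + 3) != 0.
Definition va (Mm : nat -> nat) k := Mm (Mm 2 + 4 * k + 1).
Definition vz (Mm : nat -> nat) k := Mm (Mm 2 + 4 * k + 2).

Fixpoint maxT (Mm : nat -> nat) i a :=
  if i is i'.+1 then
    (if good Mm i' && (va Mm i' == a) then maxn (maxT Mm i' a) (vz Mm i') else maxT Mm i' a)
  else 0.

Fixpoint curv (Mm : nat -> nat) p j :=
  if j is j'.+1 then maxn (curv Mm p j') (maxT Mm p j) else 0.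

Definition ans (Mm : nat -> nat) p j :=
  (Mm (Mm 3 + 6 * j + 1) != 0) && (j < curv Mm p j.+1).

Lemma maxT_gt Mm i a x : x < maxT Mm i a <->
  exists k, [/\ k < i, good Mm k, va Mm k = a & x < vz Mm k].
Proof.
elim: i => [|i IH] /=.
  split=> [//|[k [h]]]; by [].
case: ifP => [/andP[g /eqP e]|hf].
- rewrite leq_max; split.
  + case/orP => [/IH [k [h1 h2 h3 h4]]|h]; first by exists k; split => //; lia.
    by exists i; split.
  + move=> [k [h1 h2 h3 h4]]; have [eki|nki] := eqVneq k i.
      by subst k; rewrite h4 orbT.
    apply/orP; left; apply/IH; exists k; split => //; lia.
- rewrite IH; split; move=> [k [h1 h2 h3 h4]]; exists k; split => //; first lia.
  have [eki|nki] := eqVneq k i; last lia.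
  by subst k; rewrite h2 h3 eqxx in hf.
Qed.

Lemma curv_gt Mm p j x : x < curv Mm p j <->
  exists a, [/\ 1 <= a, a <= j & x < maxT Mm p a].
Proof.
elim: j => [|j IH] /=.
  split=> [//|[a [h1 h2]]]; lia.
rewrite leq_max; split.
- case/orP => [/IH [a [h1 h2 h3]]|h]; first by exists a; split => //; lia.
  by exists j.+1; split.
- move=> [a [h1 h2 h3]]; have [e|ne] := eqVneq a j.+1.
    by subst a; rewrite h3 orbT.
  apply/orP; left; apply/IH; exists a; split => //; lia.
Qed.

Lemma encb1 v P : encb v P -> v != 0 -> P.
Proof. by case=> [[_ h]|[-> _]]. Qed.
Lemma encb2 v P : encb v P -> P -> v != 0.
Proof. by case=> [[-> _]|[_ h]] //. Qed.

Lemma out_bounds rm rp sm sp j : rm <= rp -> sm <= sp -> j < blen rm rp sm sp ->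
  [/\ rm <= (outpos rm rp sm sp j).1, (outpos rm rp sm sp j).1 <= rp,
      sm <= (outpos rm rp sm sp j).2 & (outpos rm rp sm sp j).2 <= sp].
Proof.
rewrite /outpos /blen /brows /bcols => *; case: ifP => h /=; split; lia.
Qed.

Lemma ans_iff m n (M : 'M[bool]_(m, n)) rm rp sm sp Mm j :
  rm <= rp -> sm <= sp -> encodes M rm rp sm sp Mm -> j < blen rm rp sm sp ->
  ans Mm (blen rm rp sm sp) j <-> reach M (0, 0) (outpos rm rp sm sp j).
Proof.
move=> hr hs [_ _ _ hin hout] jp.
set p := blen rm rp sm sp in jp *.
have [_ ho1 _ _ _] := hout j jp.
rewrite /ans; split.
- case/andP=> /(encb1 ho1) [i ip ri] /curv_gt [a [a1 a2 /maxT_gt [k [kp g ea ez]]]].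
  have [_ hA hZ hR] := hin k kp.
  have r0 := encb1 hR g.
  case: hA => [[a' ea' [_ ra' _]]|[e0 _]]; last by move: ea; rewrite /va e0; lia.
  case: hZ => [[z' ez' [zp rz' _]]|[e0 _]]; last by move: ez; rewrite /vz e0; lia.
  move: ea ez; rewrite /va /vz ea' ez' => ea ez.
  exact: (sound hr hs kp ip zp r0 ra' rz' (j:=j) ltac:(lia) ltac:(lia) ri).
- move=> rj.
  have [b1 b2 b3 b4] := out_bounds hr hs jp.
  have [k kp [r0 rk]] := entry hr hs b1 b2 b3 b4 rj.
  have [_ hA hZ hR] := hin k kp.
  apply/andP; split; first by apply: (encb2 ho1); exists k.
  have g : good Mm k by exact: (encb2 hR r0).
  case: hA => [[a' ea' [_ ra' ma']]|[_ hn]]; last first.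
    exfalso; have [a'' [h1 h2 h3]] := ex_min (P:=fun a => reach M (inpos rm rp sm sp k) (outpos rm rp sm sp a)) rk.
    by apply: (hn a'' ltac:(lia)); split => //; lia.
  case: hZ => [[z' ez' [zp' rz' mz']]|[_ hn]]; last first.
    exfalso; have [z'' [h1 h2 h3 h4]] := ex_max (P:=fun a => reach M (inpos rm rp sm sp k) (outpos rm rp sm sp a)) rk jp.
    by apply: (hn z'' h2); split.
  have a'j : a' <= j by rewrite leqNgt; apply/negP => h; exact: (ma' j h rk).
  have jz' : j <= z' by rewrite leqNgt; apply/negP => h; exact: (mz' j h jp rk).
  apply/curv_gt; exists a'.+1; split; [done | by rewrite ltnS |].
  apply/maxT_gt; exists k; split => //; rewrite /vz ez'; lia.
Qed.



Definition Prog : program :=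
 [:: IConst 1 1; IConst 10 2; IConst 11 3; IConst 9 4; IConst 12 6; IConst 13 0;
     ILoad 2 13; ILoad 14 1; IAdd 2 2 14; ISub 2 2 1;
     ILoad 3 10; ILoad 4 11; ILoad 5 9; IAdd 6 5 2; IConst 7 0; IAdd 8 3 0;
 (*16*) ISub 13 2 7; IJz 13 33; IAdd 13 8 11; ILoad 14 13; IJz 14 30;
 IAdd 13 8 1; ILoad 15 13; IAdd 13 8 10; ILoad 16 13; IAdd 13 6 15;
 ILoad 17 13; ISub 18 16 17; IAdd 18 17 18; IStore 13 18;
 (*30*) IAdd 7 7 1; IAdd 8 8 9; IJz 0 16;
 (*33*) IConst 7 0; IAdd 20 4 0; IConst 19 0;
 (*36*) ISub 13 2 7; IJz 13 53; IAdd 13 6 7; IAdd 13 13 1; ILoad 17 13;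
 ISub 18 17 19; IAdd 19 19 18; ISub 21 19 7; IJz 21 50;
 IAdd 13 20 1; ILoad 14 13; IJz 14 50; IAdd 13 5 7; IStore 13 1;
 (*50*) IAdd 7 7 1; IAdd 20 20 12; IJz 0 36; IHalt].

Section Steps.
Lemma sC pc R mem d k : nth IHalt Prog pc = IConst d k ->
  ram_step Prog (Config pc R mem) = Config pc.+1 (upd R d k) mem.
Proof. by rewrite /ram_step /= => ->. Qed.
Lemma sA pc R mem d a b : nth IHalt Prog pc = IAdd d a b ->
  ram_step Prog (Config pc R mem) = Config pc.+1 (upd R d (R a + R b)) mem.
Proof. by rewrite /ram_step /= => ->. Qed.
Lemma sS pc R mem d a b : nth IHalt Prog pc = ISub d a b ->
  ram_step Prog (Config pc R mem) = Config pc.+1 (upd R d (R a - R b)) mem.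
Proof. by rewrite /ram_step /= => ->. Qed.
Lemma sL pc R mem d a : nth IHalt Prog pc = ILoad d a ->
  ram_step Prog (Config pc R mem) = Config pc.+1 (upd R d (mem (R a))) mem.
Proof. by rewrite /ram_step /= => ->. Qed.
Lemma sW pc R mem a x : nth IHalt Prog pc = IStore a x ->
  ram_step Prog (Config pc R mem) = Config pc.+1 R (upd mem (R a) (R x)).
Proof. by rewrite /ram_step /= => ->. Qed.
Lemma sJt pc R mem x t : nth IHalt Prog pc = IJz x t -> R x = 0 ->
  ram_step Prog (Config pc R mem) = Config t R mem.
Proof. by rewrite /ram_step /= => -> ->. Qed.
Lemma sJn pc R mem x t : nth IHalt Prog pc = IJz x t -> R x <> 0 ->
  ram_step Prog (Config pc R mem) = Config pc.+1 R mem.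
Proof. by rewrite /ram_step /= => -> /eqP/negbTE ->. Qed.
End Steps.

Arguments iter : simpl never.
Ltac st := rewrite iterSr; first
  [ erewrite sC by reflexivity | erewrite sA by reflexivity | erewrite sS by reflexivity
  | erewrite sL by reflexivity | erewrite sW by reflexivity ]; rewrite /upd /=.
Ltac jt := rewrite iterSr; erewrite sJt; [ | reflexivity | ]; last first; rewrite /upd /=.
Ltac jn := rewrite iterSr; erewrite sJn; [ | reflexivity | ]; last first; rewrite /upd /=.

Definition regsOK (Mm : nat -> nat) p (R : nat -> nat) :=
  [/\ R 0 = 0, R 1 = 1, R 2 = p, R 3 = Mm 2 &
   [/\ R 4 = Mm 3, R 5 = Mm 4, R 6 = Mm 4 + p, R 9 = 4 &
    [/\ R 10 = 2, R 11 = 3 & R 12 = 6]]].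

Definition mem_ok1 (Mm : nat -> nat) p i (mem : nat -> nat) :=
  [/\ forall a, a < Mm 4 -> mem a = Mm a,
      forall j, j < p -> mem (Mm 4 + j) = 0 &
      forall a, a <= p -> mem (Mm 4 + p + a) = maxT Mm i a].

Lemma body1 Mm p i R mem : Mm 2 + 4 * p <= Mm 4 -> (forall k, k < p -> va Mm k <= p) ->
  i < p -> regsOK Mm p R -> R 7 = i -> R 8 = Mm 2 + 4 * i -> mem_ok1 Mm p i mem ->
  exists t R' mem', [/\ t <= 17, iter t (ram_step Prog) (Config 16 R mem) = Config 16 R' mem',
     regsOK Mm p R', R' 7 = i.+1 /\ R' 8 = Mm 2 + 4 * i.+1 & mem_ok1 Mm p i.+1 mem'].
Proof.
move=> hIN hva ip [r0 r1 r2 r3 [r4 r5 r6 r9 [r10 r11 r12]]] r7 r8 [m1 m2 m3].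
have e3 : mem (Mm 2 + 4 * i + 3) = Mm (Mm 2 + 4 * i + 3) by apply: m1; lia.
have e1 : mem (Mm 2 + 4 * i + 1) = Mm (Mm 2 + 4 * i + 1) by apply: m1; lia.
have e2 : mem (Mm 2 + 4 * i + 2) = Mm (Mm 2 + 4 * i + 2) by apply: m1; lia.
have vap : va Mm i <= p by apply: hva.
case g: (good Mm i).
- eexists 17, _, _; split; first done.
  + st. jn. rewrite r2 r7; lia.
    st. st. jn. rewrite r8 r11 e3; exact/eqP.
    do 11 st. jt. rewrite r0. done. reflexivity.
  + by rewrite /regsOK /= r0 r1 r2 r3 r4 r5 r6 r9 r10 r11 r12.
  + by rewrite /= r7 r8 r1 r9; split; lia.
  + rewrite /mem_ok1 r8 r6 r1 r10 e1 e2 -/(va Mm i) -/(vz Mm i); split.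
    * move=> a ha; case: eqP => [e|_]; [lia | exact: m1].
    * move=> j jp; case: eqP => [e|_]; [lia | exact: m2].
    * move=> a ap /=; rewrite g /=; rewrite eqn_add2l.
      case: eqP => [<-|ne]; first by rewrite eqxx m3 // maxnE.
      have -> : (va Mm i == a) = false by apply/eqP => e; apply: ne.
      exact: m3.
- eexists 8, _, _; split; first done.
  + st. jn. rewrite r2 r7; lia.
    st. st. jt. rewrite r8 r11 e3; by move/negbFE/eqP: g.
    st. st. jt. rewrite r0. done. reflexivity.
  + by rewrite /regsOK /= r0 r1 r2 r3 r4 r5 r6 r9 r10 r11 r12.
  + by rewrite /= r7 r8 r1 r9; split; lia.
  + rewrite /mem_ok1; split => //.
    move=> a ap /=; rewrite g /=; exact: m3.
Qed.

Lemma loop1 Mm p : Mm 2 + 4 * p <= Mm 4 -> (forall k, k < p -> va Mm k <= p) ->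
  forall d i R mem, d = p - i -> i <= p -> regsOK Mm p R -> R 7 = i -> R 8 = Mm 2 + 4 * i ->
  mem_ok1 Mm p i mem ->
  exists t R' mem', [/\ t <= 17 * d + 2,
     iter t (ram_step Prog) (Config 16 R mem) = Config 33 R' mem',
     regsOK Mm p R' & mem_ok1 Mm p p mem'].
Proof.
move=> hIN hva; elim=> [|d IH] i R mem hd ip hR r7 r8 hm.
- have ei : i = p by lia.
  rewrite ei in hm; case: (hR) => r0 _ r2 _ _.
  exists 2, (upd R 13 (R 2 - R 7)), mem; split => //.
  rewrite iterSr; erewrite sS by reflexivity; rewrite iterSr; erewrite sJt; [done|reflexivity|].
  by rewrite /upd /= r2 r7 ei subnn.
- have ip' : i < p by lia.
  have [t1 [R1 [mem1 [h1 h2 h3 [h4 h5] h6]]]] := body1 hIN hva ip' hR r7 r8 hm.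
  have [t2 [R2 [mem2 [h7 h8 h9 h10]]]] := IH i.+1 R1 mem1 ltac:(lia) ip' h3 h4 h5 h6.
  exists (t2 + t1), R2, mem2; split => //; first lia.
  by rewrite iterD h2 h8.
Qed.

Definition mem_ok2 (Mm : nat -> nat) p j (mem : nat -> nat) :=
  [/\ forall a, a < Mm 4 -> mem a = Mm a,
      forall a, a <= p -> mem (Mm 4 + p + a) = maxT Mm p a &
      forall j', j' < p -> mem (Mm 4 + j') = (if j' < j then (if ans Mm p j' then 1 else 0) else 0)].

Lemma body2 Mm p j R mem : Mm 3 + 6 * p <= Mm 4 ->
  j < p -> regsOK Mm p R -> R 7 = j -> R 20 = Mm 3 + 6 * j -> R 19 = curv Mm p j ->
  mem_ok2 Mm p j mem ->
  exists t R' mem', [/\ t <= 17, iter t (ram_step Prog) (Config 36 R mem) = Config 36 R' mem',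
     regsOK Mm p R', [/\ R' 7 = j.+1, R' 20 = Mm 3 + 6 * j.+1 & R' 19 = curv Mm p j.+1]
     & mem_ok2 Mm p j.+1 mem'].
Proof.
move=> hOUT jp [r0 r1 r2 r3 [r4 r5 r6 r9 [r10 r11 r12]]] r7 r20 r19 [m1 m3 m2].
have e1 : mem (Mm 4 + p + j + 1) = maxT Mm p j.+1 by rewrite -addnA addn1; apply: m3.
have ec : curv Mm p j + (maxT Mm p j.+1 - curv Mm p j) = curv Mm p j.+1 by rewrite /= maxnE.
have efb : mem (Mm 3 + 6 * j + 1) = Mm (Mm 3 + 6 * j + 1) by apply: m1; lia.
have hans : ans Mm p j = (Mm (Mm 3 + 6 * j + 1) != 0) && (j < curv Mm p j.+1) by [].
have [cj|cj] := leqP (curv Mm p j.+1) j.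
- eexists 12, _, _; split; first done.
  + st. jn. rewrite r2 r7; lia.
    do 6 st. jt. rewrite r6 r7 r1 e1 r19 ec; lia.
    st. st. jt. rewrite r0. done. reflexivity.
  + by rewrite /regsOK /= r0 r1 r2 r3 r4 r5 r6 r9 r10 r11 r12.
  + by rewrite /= r7 r20 r1 r12 r6 e1 r19 ec; split => //; lia.
  + split => //.
    * move=> j' j'p; rewrite m2 //; have [->|ne] := eqVneq j' j.
      - by rewrite ltnSn ltnn hans ltnNge cj andbF.
      - by rewrite ltnS (leq_eqVlt j') (negbTE ne).
- case fb: (Mm (Mm 3 + 6 * j + 1) == 0).
  + eexists 15, _, _; split; first done.
    * st. jn. rewrite r2 r7; lia.
      do 6 st. jn. rewrite r6 r7 r1 e1 r19 ec; lia.
      st. st. jt. rewrite r20 r1 efb; exact/eqP.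
      st. st. jt. rewrite r0. done. reflexivity.
    * by rewrite /regsOK /= r0 r1 r2 r3 r4 r5 r6 r9 r10 r11 r12.
    * by rewrite /= r7 r20 r1 r12 r6 e1 r19 ec; split => //; lia.
    * split => //.
      - move=> j' j'p; rewrite m2 //; have [->|ne] := eqVneq j' j.
        + by rewrite ltnSn ltnn hans fb.
        + by rewrite ltnS (leq_eqVlt j') (negbTE ne).
  + eexists 17, _, _; split; first done.
    * st. jn. rewrite r2 r7; lia.
      do 6 st. jn. rewrite r6 r7 r1 e1 r19 ec; lia.
      st. st. jn. rewrite r20 r1 efb; move=> e; by rewrite e in fb.
      st. st. st. st. jt. rewrite r0. done. reflexivity.
    * by rewrite /regsOK /= r0 r1 r2 r3 r4 r5 r6 r9 r10 r11 r12.
    * by rewrite /= r7 r20 r1 r12 r6 e1 r19 ec; split => //; lia.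
    * rewrite /mem_ok2 r5 r7 r1; split.
      - move=> a ha; case: eqP => [e|_]; [lia | exact: m1].
      - move=> a ha; case: eqP => [e|_]; [lia | exact: m3].
      - move=> j' j'p; rewrite eqn_add2l; case: eqP => [->|ne].
        + by rewrite ltnSn hans fb cj.
        + rewrite m2 // ltnS (leq_eqVlt j').
          by have -> : (j' == j) = false by apply/eqP.
Qed.

Lemma loop2 Mm p : Mm 3 + 6 * p <= Mm 4 ->
  forall d j R mem, d = p - j -> j <= p -> regsOK Mm p R -> R 7 = j -> R 20 = Mm 3 + 6 * j ->
  R 19 = curv Mm p j -> mem_ok2 Mm p j mem ->
  exists t R' mem', [/\ t <= 17 * d + 2,
     iter t (ram_step Prog) (Config 36 R mem) = Config 53 R' mem' & mem_ok2 Mm p p mem'].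
Proof.
move=> hOUT; elim=> [|d IH] j R mem hd jp hR r7 r20 r19 hm.
- have ej : j = p by lia.
  rewrite ej in hm; case: (hR) => r0 _ r2 _ _.
  exists 2, (upd R 13 (R 2 - R 7)), mem; split => //.
  rewrite iterSr; erewrite sS by reflexivity; rewrite iterSr; erewrite sJt; [done|reflexivity|].
  by rewrite /upd /= r2 r7 ej subnn.
- have jp' : j < p by lia.
  have [t1 [R1 [mem1 [h1 h2 h3 [h4 h5 h5'] h6]]]] := body2 hOUT jp' hR r7 r20 r19 hm.
  have [t2 [R2 [mem2 [h7 h8 h10]]]] := IH j.+1 R1 mem1 ltac:(lia) jp' h3 h4 h5 h5' h6.
  exists (t2 + t1), R2, mem2; split => //; first lia.
  by rewrite iterD h2 h8.
Qed.

Theorem lemma1 :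
  exists (P : program) (C : nat),
  forall (m n : nat) (M : 'M[bool]_(m, n)) (rm rp sm sp : nat),
    rm <= rp -> rp < m -> sm <= sp -> sp < n ->
  forall Mm : nat -> nat,
    encodes M rm rp sm sp Mm ->
  exists t : nat,
    [/\ t <= C * (brows rm rp + bcols sm sp),
        halted P (iter t (ram_step P) (init Mm)) &
        output_ok M rm rp sm sp (Mm 4) (cmem (iter t (ram_step P) (init Mm)))].
Proof.
exists Prog, 34 => m n M rm rp sm sp hr _ hs _ Mm enc.
have enc' := enc.
case: enc' => [[h0 h1] [hIN hOUT] hz hin hout].
set p := blen rm rp sm sp in hIN hOUT hin hout.
have hva : forall k, k < p -> va Mm k <= p.
  move=> k kp; have [_ hA _ _] := hin k kp.
  rewrite /va; case: hA => [[j -> [jp _ _]]|[-> _]] //.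
have [R0 [E0 hR0 r70 r80]] : exists R0, [/\ iter 16 (ram_step Prog) (init Mm) = Config 16 R0 Mm,
    regsOK Mm p R0, R0 7 = 0 & R0 8 = Mm 2 + 4 * 0].
  eexists; split.
  - rewrite /init. do 16 st. reflexivity.
  - rewrite /regsOK /= h0 h1 /p /blen subn1 //.
  - done.
  - by rewrite /= muln0 addn0.
have hm1 : mem_ok1 Mm p 0 Mm.
  split => // [j jp|a ap]; first by apply: hz; lia.
  by rewrite /= hz //; lia.
have [t1 [R1 [mem1 [ht1 E1 hR1 hm1']]]] := loop1 hIN hva (erefl (p - 0)) (leq0n p) hR0 r70 r80 hm1.
case: (hR1) => q0 q1 q2 q3 [q4 q5 q6 q9 [q10 q11 q12]].
set R2 := upd (upd (upd R1 7 0) 20 (R1 4 + R1 0)) 19 0.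
have E2 : iter 3 (ram_step Prog) (Config 33 R1 mem1) = Config 36 R2 mem1.
  by do 3 st.
have hR2 : regsOK Mm p R2 by rewrite /regsOK /R2 /upd /=.
have hm2 : mem_ok2 Mm p 0 mem1.
  by case: hm1' => a b c; split => // j jp; rewrite b.
have [t2 [R3 [mem3 [ht2 E3 hm3]]]] := loop2 hOUT (erefl (p - 0)) (leq0n p) hR2
   (erefl _) ltac:(by rewrite /R2 /upd /= q4 q0 muln0 addn0) (erefl _) hm2.
exists (t2 + 3 + t1 + 16); split.
- rewrite /p /blen /brows /bcols in ht1 ht2 *; lia.
- by rewrite !iterD E0 E1 E2 E3.
- rewrite !iterD E0 E1 E2 E3 /= => j jp.
  case: hm3 => _ _ c; rewrite c // jp.
  have := ans_iff hr hs enc jp.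
  case: (ans Mm p j) => e; [left; split => //; exact/e | right; split => // h; by have := proj2 e h].
Qed.
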